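(* For $r>0$ with $r\neq 1$, $0<p<1$, $q=1-p$, and $x\in\{0,1,2,\dots\}$, let $$p_X(x;r,p)=\frac{q^{x}p^{r}}{1+x}\binom{r+x-1}{x}\,{}_2F_1(1,r+x;2+x;q)$$ denote the probability mass function of the $\mathcal{UNB}(r,p)$ distribution. Then $$p_X(x;r,p)=\frac{r}{(r-1)(r+x)p}\Big(\big(2r+x-(r+x)q\big)\,p_X(x;r+1,p)-(r+1)\,p_X(x;r+2,p)\Big).$$
   Context: For real $r>0$, $\binom{r+x-1}{x}=\frac{\Gamma(r+x)}{x!\,\Gamma(r)}$. ${}_2F_1(a,b;c;z)=\sum_{n\ge0}\frac{(a)_n(b)_n}{(c)_n}\frac{z^n}{n!}$ for $|z|<1$, with $(s)_n=s(s+1)\cdots(s+n-1)$, $(s)_0=1$. $\mathcal{UNB}(r,p)$ is the law of $X$ where $N$ is negative binomial with $P(N=n)=\binom{r+n-1}{n}p^rq^n$ and $X\mid N=n$ is uniform on $\{0,\dots,n\}$. *)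

(* Defs.v *)
From Stdlib Require Import Reals.
From Coquelicot Require Import Coquelicot.
Open Scope R_scope.

Fixpoint rising (s : R) (n : nat) : R :=
  match n with
  | O => 1
  | S m => rising s m * (s + INR m)
  end.

(* generalized binomial coefficient binom(r+x-1, x) = Gamma(r+x)/(x! Gamma(r))
   = (r)_x / x!  (Gamma(r+x)/Gamma(r) = (r)_x for r > 0) *)
Definition gbinom (r : R) (x : nat) : R := rising r x / INR (Factorial.fact x).

Definition hyp2F1 (a b c z : R) : R :=
  Series (fun n => rising a n * rising b n / rising c n * z ^ n / INR (Factorial.fact n)).

Definition pX (r p : R) (x : nat) : R :=
  (1 - p) ^ x * Rpower p r / (1 + INR x) * gbinom r x
  * hyp2F1 1 (r + INR x) (2 + INR x) (1 - p).

(* Main.v *)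
Require Import Defs.
From Stdlib Require Import Reals Lra Lia Factorial.
From Coquelicot Require Import Coquelicot.
Open Scope R_scope.

Lemma lim_frac (al be : R) : 0 < be ->
  is_lim_seq (fun k => (al + INR k) / (be + INR k)) 1.
Proof.
  intros Hb.
  assert (H1 : is_lim_seq (fun k => be + INR k) p_infty).
  { eapply is_lim_seq_plus. apply is_lim_seq_const. apply is_lim_seq_INR. reflexivity. }
  apply is_lim_seq_inv in H1; [|discriminate].
  simpl in H1.
  apply is_lim_seq_scal_l with (a := al - be) in H1.
  apply is_lim_seq_plus' with (u := fun _ => 1) (l1 := 1) in H1; [|apply is_lim_seq_const].
  simpl in H1. rewrite Rmult_0_r, Rplus_0_r in H1.
  eapply is_lim_seq_ext; [|exact H1].
  intros k; simpl. pose proof (pos_INR k). field. lra.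
Qed.

Lemma rising_add (s : R) (m k : nat) :
  rising s (m + k) = rising s m * rising (s + INR m) k.
Proof.
  induction k as [|k IH]; simpl.
  - rewrite Nat.add_0_r. ring.
  - rewrite Nat.add_succ_r. simpl. rewrite IH, plus_INR. ring.
Qed.

Lemma rising_S (s : R) (n : nat) : rising s (S n) = s * rising (s + 1) n.
Proof.
  change (S n) with (1 + n)%nat. rewrite rising_add. simpl. ring.
Qed.

Lemma rising_one (n : nat) : rising 1 n = INR (fact n).
Proof.
  induction n as [|n IH]; simpl rising.
  - reflexivity.
  - rewrite IH. change (fact (S n)) with (S n * fact n)%nat.
    rewrite mult_INR, S_INR. ring.
Qed.

Lemma rising_pos (s : R) (n : nat) : 0 < s -> 0 < rising s n.
Proof.
  intros Hs. induction n as [|n IH]; simpl.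
  - lra.
  - pose proof (pos_INR n). apply Rmult_lt_0_compat; lra.
Qed.

Lemma rising_two (x k : nat) :
  rising (2 + INR x) k * INR (fact (x + 1)) = INR (fact (x + k + 1)).
Proof.
  rewrite <- !rising_one.
  replace (x + k + 1)%nat with ((x + 1) + k)%nat by lia.
  rewrite (rising_add 1 (x+1) k), (rising_add 1 x 1), plus_INR. simpl INR.
  replace (1 + (INR x + 1)) with (2 + INR x) by ring. ring.
Qed.

Definition a (q r : R) (x k : nat) : R :=
  rising r (x + k) * q ^ (x + k) / INR (fact (x + k + 1)).

Lemma pX_eq (r p : R) (x : nat) :
  pX r p x = Rpower p r * Series (a (1 - p) r x).
Proof.
  unfold pX, hyp2F1, gbinom.
  rewrite <- Series_scal_l.
  rewrite <- Series_scal_l.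
  apply Series_ext. intros n.
  unfold a.
  rewrite rising_one.
  rewrite rising_add.
  pose proof (rising_two x n) as H2.
  rewrite <- H2.
  replace (fact (x+1)) with (fact (S x)) by (f_equal; lia).
  change (fact (S x)) with (S x * fact x)%nat.
  rewrite mult_INR, S_INR, pow_add.
  assert (0 < rising (2 + INR x) n) by (apply rising_pos; pose proof (pos_INR x); lra).
  pose proof (INR_fact_neq_0 x). pose proof (INR_fact_neq_0 n). pose proof (pos_INR x).
  field. repeat split; lra.
Qed.

Lemma a_pos q r x k : 0 < q -> 0 < r -> 0 < a q r x k.
Proof.
  intros. unfold a. apply Rdiv_lt_0_compat.
  - apply Rmult_lt_0_compat. apply rising_pos; auto. apply pow_lt; auto.
  - apply INR_fact_lt_0.
Qed.

Lemma a_succ q r x k :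
  a q r x (S k) * (INR x + INR k + 2) = q * (r + INR x + INR k) * a q r x k.
Proof.
  unfold a. rewrite Nat.add_succ_r.
  replace (S (x + k) + 1)%nat with (S (x + k + 1)) by lia.
  change (fact (S (x + k + 1))) with (S (x + k + 1) * fact (x + k + 1))%nat.
  simpl rising. simpl pow. rewrite mult_INR, S_INR, !plus_INR. simpl INR.
  pose proof (INR_fact_neq_0 (x + k + 1)). pose proof (pos_INR x). pose proof (pos_INR k).
  field. lra.
Qed.

Lemma a_r1 q r x k :
  r * a q (r + 1) x k = a q r x k * (r + INR x + INR k).
Proof.
  unfold a. 
  replace (r * (rising (r + 1) (x + k) * q ^ (x + k) / INR (fact (x + k + 1))))
    with (rising r (S (x + k)) * q ^ (x + k) / INR (fact (x + k + 1)))
    by (rewrite rising_S; field; apply INR_fact_neq_0).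
  simpl rising. rewrite plus_INR. field. apply INR_fact_neq_0.
Qed.

Lemma ex_b q r x : 0 < q < 1 -> 0 < r ->
  ex_series (fun k => a q r x k * (INR k + 1) ^ 2).
Proof.
  intros Hq Hr.
  set (b := fun k => a q r x k * (INR k + 1) ^ 2).
  assert (Hbpos : forall k, 0 < b k).
  { intros k. unfold b. apply Rmult_lt_0_compat. apply a_pos; lra.
    pose proof (pos_INR k). apply pow_lt. lra. }
  assert (HD : ex_series (fun k => Rabs (b k))).
  { apply (ex_series_DAlembert b q); [lra | intros k; specialize (Hbpos k); lra |].
    assert (HL : is_lim_seq (fun k => q * ((r + INR x + INR k) / (INR x + 2 + INR k))
        * ((2 + INR k) / (1 + INR k)) * ((2 + INR k) / (1 + INR k))) (q * 1 * 1 * 1)).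
    { apply is_lim_seq_mult'. apply is_lim_seq_mult'. apply is_lim_seq_mult'.
      apply is_lim_seq_const. apply lim_frac. pose proof (pos_INR x); lra.
      apply lim_frac; lra. apply lim_frac; lra. }
    rewrite !Rmult_1_r in HL.
    eapply is_lim_seq_ext; [|exact HL].
    intros k. simpl.
    pose proof (Hbpos k). pose proof (Hbpos (S k)).
    rewrite Rabs_pos_eq by (apply Rlt_le, Rdiv_lt_0_compat; auto).
    unfold b. 
    pose proof (a_succ q r x k) as Hs.
    pose proof (a_pos q r x k ltac:(lra) Hr).
    pose proof (pos_INR x). pose proof (pos_INR k).
    assert (Ha : a q r x (S k) = q * (r + INR x + INR k) * a q r x k / (INR x + INR k + 2)).
    { rewrite <- Hs. field. lra. }
    rewrite Ha, S_INR. field. repeat split; lra. }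
  eapply ex_series_ext; [|exact HD].
  intros k. simpl. apply Rabs_pos_eq. apply Rlt_le, Hbpos.
Qed.

Lemma ex_A q r x j : 0 < q < 1 -> 0 < r -> (j <= 2)%nat ->
  ex_series (fun k => a q r x k * INR k ^ j).
Proof.
  intros Hq Hr Hj.
  apply (@ex_series_le R_AbsRing R_CompleteNormedModule _ (fun k => a q r x k * (INR k + 1) ^ 2)); [|apply ex_b; auto].
  intros k. 
  change (norm (a q r x k * INR k ^ j)) with (Rabs (a q r x k * INR k ^ j)).
  pose proof (a_pos q r x k ltac:(lra) Hr). pose proof (pos_INR k).
  rewrite Rabs_pos_eq by (apply Rmult_le_pos; [lra | apply pow_le; lra]).
  apply Rmult_le_compat_l; [lra|].
  destruct j as [|[|[|j]]]; simpl; try lia; nra.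
Qed.

Section Main.
Variables (q r : R) (x : nat).
Hypotheses (Hq : 0 < q < 1) (Hr : 0 < r).

Definition E (j : nat) := Series (fun k => a q r x k * INR k ^ j).

Lemma lin3 (c0 c1 c2 : R) (f : nat -> R) :
  (forall k, f k = c0 * (a q r x k * INR k ^ 0) + c1 * (a q r x k * INR k ^ 1)
                    + c2 * (a q r x k * INR k ^ 2)) ->
  is_series f (c0 * E 0 + c1 * E 1 + c2 * E 2).
Proof.
  intros Hf.
  eapply is_series_ext. intros k; symmetry; apply Hf.
  apply (@is_series_plus R_AbsRing R_NormedModule). apply (@is_series_plus R_AbsRing R_NormedModule).
  - apply (@is_series_scal_l R_AbsRing R_NormedModule). apply Series_correct, ex_A; auto.
  - apply (@is_series_scal_l R_AbsRing R_NormedModule). apply Series_correct, ex_A; auto.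
  - apply (@is_series_scal_l R_AbsRing R_NormedModule). apply Series_correct, ex_A; auto.
Qed.

End Main.

Lemma inv_cancel (c y : R) : c <> 0 -> / c * (c * y) = y.
Proof. intros. field. auto. Qed.

Theorem theorem2 (r p : R) (x : nat) :
  0 < r -> r <> 1 -> 0 < p < 1 ->
  pX r p x =
  r / ((r - 1) * (r + INR x) * p) *
  ((2 * r + INR x - (r + INR x) * (1 - p)) * pX (r + 1) p x
   - (r + 1) * pX (r + 2) p x).
Proof.
  intros Hr Hr1 Hp.
  set (q := 1 - p).
  assert (Hq : 0 < q < 1) by (unfold q; lra).
  pose proof (pos_INR x) as Hx.
  rewrite !pX_eq. fold q.
  assert (F1 : Series (a q r x) = E q r x 0).
  { apply is_series_unique.
    replace (E q r x 0) with (1 * E q r x 0 + 0 * E q r x 1 + 0 * E q r x 2) by ring.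
    apply lin3; auto. intros k. simpl. ring. }
  assert (F2 : Series (a q (r + 1) x) = ((r + INR x) * E q r x 0 + E q r x 1) / r).
  { apply is_series_unique.
    apply (@is_series_ext R_AbsRing R_NormedModule (fun k => / r * (r * a q (r + 1) x k))).
    { intros k. apply inv_cancel. lra. }
    replace (((r + INR x) * E q r x 0 + E q r x 1) / r)
      with (/ r * ((r + INR x) * E q r x 0 + 1 * E q r x 1 + 0 * E q r x 2)) by (field; lra).
    apply (@is_series_scal_l R_AbsRing R_NormedModule).
    apply lin3; auto. intros k. rewrite a_r1. simpl. ring. }
  assert (F3 : Series (a q (r + 2) x) =
     ((r + INR x) * (r + INR x + 1) * E q r x 0 + (2 * (r + INR x) + 1) * E q r x 1 + E q r x 2)
      / (r * (r + 1))).
  { apply is_series_unique.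
    assert (H3 : forall k, r * (r + 1) * a q (r + 1 + 1) x k
        = a q r x k * (r + INR x + INR k) * (r + 1 + INR x + INR k)).
    { intros k. rewrite Rmult_assoc, a_r1.
      replace (r * (a q (r + 1) x k * (r + 1 + INR x + INR k)))
        with ((r * a q (r + 1) x k) * (r + 1 + INR x + INR k)) by ring.
      rewrite a_r1. ring. }
    apply (@is_series_ext R_AbsRing R_NormedModule (fun k => / (r * (r + 1)) * (r * (r + 1) * a q ((r + 1) + 1) x k))).
    { intros k. replace (r + 1 + 1) with (r + 2) by ring. apply inv_cancel.
      apply Rmult_integral_contrapositive_currified; lra. }
    replace (((r + INR x) * (r + INR x + 1) * E q r x 0 + (2 * (r + INR x) + 1) * E q r x 1 + E q r x 2)
      / (r * (r + 1)))
      with (/ (r * (r + 1)) * ((r + INR x) * (r + INR x + 1) * E q r x 0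
              + (2 * (r + INR x) + 1) * E q r x 1 + 1 * E q r x 2)) by (field; lra).
    apply (@is_series_scal_l R_AbsRing R_NormedModule).
    apply lin3; auto. intros k. rewrite H3. simpl. ring. }
  assert (Rel : p * E q r x 2 =
     q * (r + INR x) * E q r x 0 + q * (r + INR x + 1) * E q r x 1 - (INR x + 1) * E q r x 1).
  { set (g := fun k => a q r x k * INR k * (INR x + INR k + 1)).
    assert (G1 : is_series g (0 * E q r x 0 + (INR x + 1) * E q r x 1 + 1 * E q r x 2)).
    { apply lin3; auto. intros k. unfold g. simpl. ring. }
    assert (G2 : is_series (fun k => g (S k))
        (q * (r + INR x) * E q r x 0 + q * (r + INR x + 1) * E q r x 1 + q * E q r x 2)).
    { apply lin3; auto. intros k. unfold g. rewrite S_INR.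
      replace (a q r x (S k) * (INR k + 1) * (INR x + (INR k + 1) + 1))
        with ((a q r x (S k) * (INR x + INR k + 2)) * (INR k + 1)) by ring.
      rewrite a_succ. simpl. ring. }
    pose proof (Series_incr_1 g (ex_intro _ _ G1)) as Hi.
    rewrite (is_series_unique _ _ G1), (is_series_unique _ _ G2) in Hi.
    unfold g in Hi at 1. simpl in Hi. unfold q in *. lra. }
  rewrite F1, F2, F3.
  rewrite !Rpower_plus, Rpower_1 by lra.
  assert (HP2 : Rpower p 2 = p ^ 2).
  { replace 2 with (INR 2) by (simpl; ring). apply Rpower_pow. lra. }
  rewrite HP2.
  assert (HE2 : E q r x 2 = (q * (r + INR x) * E q r x 0 + q * (r + INR x + 1) * E q r x 1
       - (INR x + 1) * E q r x 1) / p) by (rewrite <- Rel; field; lra).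
  rewrite HE2. unfold q. simpl. field. repeat split; lra.
Qed.
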